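(* Let $f: B_1(0) \subseteq \mathbb{C} \to \mathbb{R}^3$ be a smooth conformal Willmore immersion with pull-back metric $g = f^*g_{euc} = e^{2u} g_{euc}$. Let $\nu$ be a smooth unit normal field along $f$, $h_{ij}$ the scalar second fundamental form with respect to $\nu$, $H = g^{ij}h_{ij}$ the scalar mean curvature, $h^0_{ij} = h_{ij} - \frac12 H g_{ij}$, and $\varphi := h^0_{11} - i\, h^0_{12}$. Then there is a smooth matrix-valued function $M: B_1(0) \to \mathbb{C}^{2\times 2}$ such that $$\partial_{\bar z} (\varphi, \partial_z H)^T = M \cdot (\varphi, \partial_z H)^T \quad \text{on } B_1(0).$$
   Context: Wirtinger derivatives: $\partial_z = \frac12(\partial_1 - i\partial_2)$, $\partial_{\bar z} = \frac12(\partial_1 + i \partial_2)$. The Willmore functional of an immersion $f$ of a surface into $\mathbb{R}^3$ is $\mathcal{W}(f) = \frac14 \int H^2\, d\mu_g$. A Willmore immersion is a critical point of $\mathcal{W}$; such an immersion satisfies the Euler–Lagrange equation $\Delta_g H + |A^0|_g^2 H = 0$, where $\Delta_g$ is the Laplace–Beltrami operator of $g$ and $A^0 = A - \frac12 \vec{H} g$ is the tracefree second fundamental form. *)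

(* Defs.v *)
From Stdlib Require Import Reals List.
From Coquelicot Require Import Coquelicot.
Open Scope R_scope.

(** Points of B_1(0) ⊂ C ≅ R^2 are written (x, y) with z = x + i y. *)
Definition in_disk (x y : R) : Prop := x ^ 2 + y ^ 2 < 1.

Definition pd1 (F : R -> R -> R) : R -> R -> R :=
  fun x y => Derive (fun t => F t y) x.
Definition pd2 (F : R -> R -> R) : R -> R -> R :=
  fun x y => Derive (fun t => F x t) y.

(** Iterated partial derivative: true = ∂_1, false = ∂_2. *)
Fixpoint iter_pd (l : list bool) (F : R -> R -> R) : R -> R -> R :=
  match l with
  | nil => F
  | b :: l' => (if b then pd1 else pd2) (iter_pd l' F)
  end.

Definition cont2_at (G : R -> R -> R) (x y : R) : Prop :=
  forall eps : R, 0 < eps -> exists delta : R, 0 < delta /\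
    forall x' y' : R, (x' - x) ^ 2 + (y' - y) ^ 2 < delta ^ 2 ->
      Rabs (G x' y' - G x y) < eps.

Definition smooth_disk (F : R -> R -> R) : Prop :=
  forall (l : list bool) (x y : R), in_disk x y ->
    cont2_at (iter_pd l F) x y /\
    ex_derive (fun t => iter_pd l F t y) x /\
    ex_derive (fun t => iter_pd l F x t) y.

Definition V3 := (R * R * R)%type.
Definition c1 (F : R -> R -> V3) : R -> R -> R := fun x y => fst (fst (F x y)).
Definition c2 (F : R -> R -> V3) : R -> R -> R := fun x y => snd (fst (F x y)).
Definition c3 (F : R -> R -> V3) : R -> R -> R := fun x y => snd (F x y).

Definition smooth_disk3 (F : R -> R -> V3) : Prop :=
  smooth_disk (c1 F) /\ smooth_disk (c2 F) /\ smooth_disk (c3 F).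

Definition pd1v (F : R -> R -> V3) : R -> R -> V3 :=
  fun x y => (pd1 (c1 F) x y, pd1 (c2 F) x y, pd1 (c3 F) x y).
Definition pd2v (F : R -> R -> V3) : R -> R -> V3 :=
  fun x y => (pd2 (c1 F) x y, pd2 (c2 F) x y, pd2 (c3 F) x y).

Definition dot3 (a b : V3) : R :=
  fst (fst a) * fst (fst b) + snd (fst a) * snd (fst b) + snd a * snd b.

Definition cre (F : R -> R -> C) : R -> R -> R := fun x y => fst (F x y).
Definition cim (F : R -> R -> C) : R -> R -> R := fun x y => snd (F x y).

Definition smooth_diskC (F : R -> R -> C) : Prop :=
  smooth_disk (cre F) /\ smooth_disk (cim F).

(** Wirtinger derivatives: ∂_z = (∂_1 - i ∂_2)/2, ∂_zbar = (∂_1 + i ∂_2)/2. *)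
Definition dz (F : R -> R -> C) : R -> R -> C :=
  fun x y => ((pd1 (cre F) x y + pd2 (cim F) x y) / 2,
              (pd1 (cim F) x y - pd2 (cre F) x y) / 2).
Definition dzbar (F : R -> R -> C) : R -> R -> C :=
  fun x y => ((pd1 (cre F) x y - pd2 (cim F) x y) / 2,
              (pd1 (cim F) x y + pd2 (cre F) x y) / 2).

Definition realC (F : R -> R -> R) : R -> R -> C := fun x y => (F x y, 0).

Definition conformal_with (f : R -> R -> V3) (u : R -> R -> R) : Prop :=
  forall x y, in_disk x y ->
    dot3 (pd1v f x y) (pd1v f x y) = exp (2 * u x y) /\
    dot3 (pd2v f x y) (pd2v f x y) = exp (2 * u x y) /\
    dot3 (pd1v f x y) (pd2v f x y) = 0.

Definition unit_normal (f nu : R -> R -> V3) : Prop :=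
  forall x y, in_disk x y ->
    dot3 (nu x y) (nu x y) = 1 /\
    dot3 (nu x y) (pd1v f x y) = 0 /\
    dot3 (nu x y) (pd2v f x y) = 0.

Definition h11 (f nu : R -> R -> V3) : R -> R -> R :=
  fun x y => dot3 (pd1v (pd1v f) x y) (nu x y).
Definition h12 (f nu : R -> R -> V3) : R -> R -> R :=
  fun x y => dot3 (pd2v (pd1v f) x y) (nu x y).
Definition h22 (f nu : R -> R -> V3) : R -> R -> R :=
  fun x y => dot3 (pd2v (pd2v f) x y) (nu x y).

(** Scalar mean curvature H = g^{ij} h_ij with g_ij = e^{2u} δ_ij. *)
Definition Hmean (f nu : R -> R -> V3) (u : R -> R -> R) : R -> R -> R :=
  fun x y => exp (- (2 * u x y)) * (h11 f nu x y + h22 f nu x y).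

Definition h0_11 f nu u : R -> R -> R :=
  fun x y => h11 f nu x y - / 2 * Hmean f nu u x y * exp (2 * u x y).
Definition h0_12 f nu (u : R -> R -> R) : R -> R -> R := h12 f nu.
Definition h0_22 f nu u : R -> R -> R :=
  fun x y => h22 f nu x y - / 2 * Hmean f nu u x y * exp (2 * u x y).

(** |A^0|_g^2 = g^{ik} g^{jl} h^0_ij h^0_kl. *)
Definition normA0sq f nu u : R -> R -> R :=
  fun x y => exp (- (4 * u x y)) *
    (h0_11 f nu u x y ^ 2 + 2 * h0_12 f nu u x y ^ 2 + h0_22 f nu u x y ^ 2).

(** Laplace–Beltrami of a scalar function for g = e^{2u} g_euc. *)
Definition lap_g (u F : R -> R -> R) : R -> R -> R :=
  fun x y => exp (- (2 * u x y)) * (pd1 (pd1 F) x y + pd2 (pd2 F) x y).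

Definition willmore_eq (f nu : R -> R -> V3) (u : R -> R -> R) : Prop :=
  forall x y, in_disk x y ->
    lap_g u (Hmean f nu u) x y + normA0sq f nu u x y * Hmean f nu u x y = 0.

Definition phi f nu u : R -> R -> C :=
  fun x y => (h0_11 f nu u x y, - h0_12 f nu u x y).

(* Main.v *)
Require Import Defs.
From Stdlib Require Import Reals List Lra Psatz.
From Coquelicot Require Import Coquelicot.
Open Scope R_scope.
Local Notation c1 := Defs.c1.

Lemma disk_loc x y : in_disk x y -> locally_2d in_disk x y.
Proof.
  unfold in_disk; intros H.
  assert (0 <= x^2) by apply pow2_ge_0. assert (0 <= y^2) by apply pow2_ge_0.
  remember ((1 - (x^2+y^2))/8) as r eqn:Er.
  assert (Hr : 0 < r) by lra.
  exists (mkposreal r Hr); intros u v Hu Hv; unfold in_disk.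
  change (Rabs (u-x) < r) in Hu; change (Rabs (v-y) < r) in Hv.
  apply Rabs_def2 in Hu; apply Rabs_def2 in Hv.
  assert (-1 < x < 1) by (split; nra). assert (-1 < y < 1) by (split; nra).
  assert (r <= 1/8) by lra.
  assert (0 < (1-x)*(r-(u-x))) by (apply Rmult_lt_0_compat; lra).
  assert (0 < (1+x)*(r+(u-x))) by (apply Rmult_lt_0_compat; lra).
  assert (0 < (1-y)*(r-(v-y))) by (apply Rmult_lt_0_compat; lra).
  assert (0 < (1+y)*(r+(v-y))) by (apply Rmult_lt_0_compat; lra).
  assert ((u-x)^2 < r^2) by nra. assert ((v-y)^2 < r^2) by nra.
  assert (r^2 <= r/8) by nra.
  replace (u^2+v^2) with (x^2+y^2 + 2*x*(u-x) + 2*y*(v-y) + (u-x)^2 + (v-y)^2) by ring.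
  nra.
Qed.

Lemma cont2_of G x y : continuity_2d_pt G x y -> cont2_at G x y.
Proof.
  intros Hc eps He. destruct (Hc (mkposreal eps He)) as [d Hd].
  exists d. split; [apply cond_pos|]. intros x' y' H. 
  assert (0 < d) by apply cond_pos.
  assert (0 <= (y'-y)^2) by apply pow2_ge_0. assert (0 <= (x'-x)^2) by apply pow2_ge_0.
  assert ((x'-x)^2 < d^2) by lra. assert ((y'-y)^2 < d^2) by lra.
  apply Hd.
  - apply Rabs_def1; nra.
  - apply Rabs_def1; nra.
Qed.

Lemma cont2_to G x y : cont2_at G x y -> continuity_2d_pt G x y.
Proof.
  intros Hc eps. destruct (Hc eps (cond_pos eps)) as [d [Hd0 Hd]].
  assert (Hd2 : 0 < d/2) by lra.
  exists (mkposreal _ Hd2). simpl. intros u v Hu Hv. apply Hd.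
  apply Rabs_def2 in Hu; apply Rabs_def2 in Hv. nra.
Qed.

Definition good (F : R -> R -> R) := forall x y, in_disk x y ->
  continuity_2d_pt F x y /\ ex_derive (fun t => F t y) x /\ ex_derive (fun t => F x t) y.

Definition agree (F G : R -> R -> R) := forall x y, in_disk x y -> F x y = G x y.

Lemma iter_pd_app l1 l2 F : iter_pd (l1 ++ l2) F = iter_pd l1 (iter_pd l2 F).
Proof. induction l1 as [|b l IH]; simpl; [reflexivity|rewrite IH; reflexivity]. Qed.

Lemma smooth_pd1 F : smooth_disk F -> smooth_disk (pd1 F).
Proof. intros H l x y Hd. specialize (H (l ++ true :: nil) x y Hd). rewrite iter_pd_app in H. exact H. Qed.
Lemma smooth_pd2 F : smooth_disk F -> smooth_disk (pd2 F).
Proof. intros H l x y Hd. specialize (H (l ++ false :: nil) x y Hd). rewrite iter_pd_app in H. exact H. Qed.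

Lemma smooth_good F : smooth_disk F -> good F.
Proof. intros H x y Hd. destruct (H nil x y Hd) as [A [B C]]. split; [apply cont2_to; exact A|split; assumption]. Qed.

Lemma loc_x (P : R -> R -> Prop) x y : locally_2d P x y -> locally x (fun t => P t y).
Proof. apply locally_2d_1d_const_y. Qed.
Lemma loc_y (P : R -> R -> Prop) x y : locally_2d P x y -> locally y (fun t => P x t).
Proof. apply locally_2d_1d_const_x. Qed.

Lemma agree_loc F G x y : agree F G -> in_disk x y -> locally_2d (fun a b => F a b = G a b) x y.
Proof. intros H Hd. destruct (disk_loc x y Hd) as [d Hd']. exists d. intros; apply H, Hd'; assumption. Qed.

Lemma agree_pd1 F G : agree F G -> agree (pd1 F) (pd1 G).
Proof. intros H x y Hd. unfold pd1. apply Derive_ext_loc. apply (loc_x (fun a b => F a b = G a b)). apply agree_loc; assumption. Qed.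
Lemma agree_pd2 F G : agree F G -> agree (pd2 F) (pd2 G).
Proof. intros H x y Hd. unfold pd2. apply Derive_ext_loc. apply (loc_y (fun a b => F a b = G a b)). apply agree_loc; assumption. Qed.

Lemma agree_good F G : agree F G -> good G -> good F.
Proof.
  intros H HG x y Hd. destruct (HG x y Hd) as [A [B C]].
  assert (L := agree_loc G F x y (fun a b h => eq_sym (H a b h)) Hd).
  split; [|split].
  - eapply continuity_2d_pt_ext_loc; [exact L|exact A].
  - eapply ex_derive_ext_loc; [exact (loc_x _ _ _ L)|exact B].
  - eapply ex_derive_ext_loc; [exact (loc_y _ _ _ L)|exact C].
Qed.

Inductive ex : Type :=
 | At (F : R -> R -> R) | Cs (c : R) | Ad (a b : ex) | Mu (a b : ex) | Ex (a : ex).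

Fixpoint ev (e : ex) (x y : R) : R :=
  match e with
  | At F => F x y | Cs c => c | Ad a b => ev a x y + ev b x y
  | Mu a b => ev a x y * ev b x y | Ex a => exp (ev a x y) end.

Fixpoint wf (e : ex) : Prop :=
  match e with
  | At F => smooth_disk F | Cs _ => True | Ad a b => wf a /\ wf b
  | Mu a b => wf a /\ wf b | Ex a => wf a end.

Fixpoint dd (b : bool) (e : ex) : ex :=
  match e with
  | At F => At ((if b then pd1 else pd2) F) | Cs _ => Cs 0
  | Ad a c => Ad (dd b a) (dd b c)
  | Mu a c => Ad (Mu (dd b a) c) (Mu a (dd b c))
  | Ex a => Mu (dd b a) (Ex a) end.

Lemma wf_dd b e : wf e -> wf (dd b e).
Proof.
  induction e; simpl; intuition.
  destruct b; [apply smooth_pd1|apply smooth_pd2]; assumption.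
Qed.

Lemma exp_cont z : continuity_pt exp z.
Proof. apply derivable_continuous_pt, derivable_pt_exp. Qed.

Lemma ev_good e : wf e -> good (ev e).
Proof.
  induction e; simpl; intros W x y Hd.
  - apply smooth_good; assumption.
  - split; [apply continuity_2d_pt_const|split; apply ex_derive_const].
  - destruct W as [Wa Wb]. destruct (IHe1 Wa x y Hd) as [A1 [B1 C1]].
    destruct (IHe2 Wb x y Hd) as [A2 [B2 C2]].
    split; [apply continuity_2d_pt_plus; assumption|split; auto_derive; auto].
  - destruct W as [Wa Wb]. destruct (IHe1 Wa x y Hd) as [A1 [B1 C1]].
    destruct (IHe2 Wb x y Hd) as [A2 [B2 C2]].
    split; [apply continuity_2d_pt_mult; assumption|split; auto_derive; auto].
  - destruct (IHe W x y Hd) as [A1 [B1 C1]]. split; [|split].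
    + apply continuity_1d_2d_pt_comp; [apply exp_cont|assumption].
    + auto_derive; auto.
    + auto_derive; auto.
Qed.

Lemma ev_dd1 e x y : wf e -> in_disk x y -> pd1 (ev e) x y = ev (dd true e) x y.
Proof.
  revert x y; induction e; simpl; intros x y W Hd; unfold pd1 in *.
  - reflexivity.
  - apply Derive_const.
  - destruct W as [Wa Wb]. destruct (ev_good _ Wa x y Hd) as [_ [B1 _]].
    destruct (ev_good _ Wb x y Hd) as [_ [B2 _]].
    rewrite Derive_plus; [|assumption|assumption]. rewrite IHe1, IHe2; auto.
  - destruct W as [Wa Wb]. destruct (ev_good _ Wa x y Hd) as [_ [B1 _]].
    destruct (ev_good _ Wb x y Hd) as [_ [B2 _]].
    rewrite Derive_mult; [|assumption|assumption]. rewrite IHe1, IHe2; auto.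
  - destruct (ev_good _ W x y Hd) as [_ [B1 _]].
    rewrite (Derive_comp exp (fun t => ev e t y)); [|exists (exp (ev e x y)); apply is_derive_exp|assumption].
    rewrite (is_derive_unique _ _ _ (is_derive_exp _)). rewrite IHe; auto.
Qed.

Lemma ev_dd2 e x y : wf e -> in_disk x y -> pd2 (ev e) x y = ev (dd false e) x y.
Proof.
  revert x y; induction e; simpl; intros x y W Hd; unfold pd2 in *.
  - reflexivity.
  - apply Derive_const.
  - destruct W as [Wa Wb]. destruct (ev_good _ Wa x y Hd) as [_ [_ B1]].
    destruct (ev_good _ Wb x y Hd) as [_ [_ B2]].
    rewrite Derive_plus; [|assumption|assumption]. rewrite IHe1, IHe2; auto.
  - destruct W as [Wa Wb]. destruct (ev_good _ Wa x y Hd) as [_ [_ B1]].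
    destruct (ev_good _ Wb x y Hd) as [_ [_ B2]].
    rewrite Derive_mult; [|assumption|assumption]. rewrite IHe1, IHe2; auto.
  - destruct (ev_good _ W x y Hd) as [_ [_ B1]].
    rewrite (Derive_comp exp (fun t => ev e x t)); [|exists (exp (ev e x y)); apply is_derive_exp|assumption].
    rewrite (is_derive_unique _ _ _ (is_derive_exp _)). rewrite IHe; auto.
Qed.

Definition CC (F : R -> R -> R) := exists e, wf e /\ agree F (ev e).

Lemma CC_good F : CC F -> good F.
Proof. intros [e [W A]]. eapply agree_good; [exact A|apply ev_good; exact W]. Qed.

Lemma CC_pd1 F : CC F -> CC (pd1 F).
Proof.
  intros [e [W A]]. exists (dd true e). split; [apply wf_dd; exact W|].
  intros x y Hd. rewrite (agree_pd1 _ _ A x y Hd). apply ev_dd1; assumption.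
Qed.
Lemma CC_pd2 F : CC F -> CC (pd2 F).
Proof.
  intros [e [W A]]. exists (dd false e). split; [apply wf_dd; exact W|].
  intros x y Hd. rewrite (agree_pd2 _ _ A x y Hd). apply ev_dd2; assumption.
Qed.

Lemma CC_smooth F : CC F -> smooth_disk F.
Proof.
  intros H l. assert (Hl : CC (iter_pd l F)).
  { induction l as [|b l IH]; simpl; [exact H|destruct b; [apply CC_pd1|apply CC_pd2]; exact IH]. }
  intros x y Hd. destruct (CC_good _ Hl x y Hd) as [A [B C]].
  split; [apply cont2_of; exact A|split; assumption].
Qed.
Lemma smooth_CC F : smooth_disk F -> CC F.
Proof. intros H. exists (At F). split; [exact H|intros x y _; reflexivity]. Qed.

Lemma sm3_pd1v g : smooth_disk3 g -> smooth_disk3 (pd1v g).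
Proof. intros [A [B C]]. split; [|split]; apply smooth_pd1; assumption. Qed.
Lemma sm3_pd2v g : smooth_disk3 g -> smooth_disk3 (pd2v g).
Proof. intros [A [B C]]. split; [|split]; apply smooth_pd2; assumption. Qed.

Lemma Schw F x y : smooth_disk F -> in_disk x y -> pd1 (pd2 F) x y = pd2 (pd1 F) x y.
Proof.
  intros H Hd. apply Schwarz.
  - apply locally_2d_impl with (P := in_disk); [|apply disk_loc; exact Hd].
    apply locally_2d_forall. intros u v Hu.
    destruct (H nil u v Hu) as [_ [A B]].
    destruct (H (false :: nil) u v Hu) as [_ [C _]].
    destruct (H (true :: nil) u v Hu) as [_ [_ D]].
    split; [exact A|split; [exact B|split; [exact C|exact D]]].
  - apply cont2_to. exact (proj1 (H (true :: false :: nil) x y Hd)).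
  - apply cont2_to. exact (proj1 (H (false :: true :: nil) x y Hd)).
Qed.

Lemma schw3 g x y : smooth_disk3 g -> in_disk x y -> pd1v (pd2v g) x y = pd2v (pd1v g) x y.
Proof.
  intros [A [B C]] Hd.
  change ((pd1 (pd2 (c1 g)) x y, pd1 (pd2 (c2 g)) x y, pd1 (pd2 (c3 g)) x y) =
          (pd2 (pd1 (c1 g)) x y, pd2 (pd1 (c2 g)) x y, pd2 (pd1 (c3 g)) x y)).
  rewrite (Schw _ _ _ A Hd), (Schw _ _ _ B Hd), (Schw _ _ _ C Hd). reflexivity.
Qed.

Definition agree3 (g h : R -> R -> V3) := forall x y, in_disk x y -> g x y = h x y.

Lemma agree3_pd2v g h x y : agree3 g h -> in_disk x y -> pd2v g x y = pd2v h x y.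
Proof.
  intros H Hd. unfold pd2v.
  rewrite (agree_pd2 (c1 g) (c1 h)), (agree_pd2 (c2 g) (c2 h)), (agree_pd2 (c3 g) (c3 h)); auto;
  intros a b Hab; unfold c1, c2, c3; rewrite H; auto.
Qed.
Lemma agree3_pd1v g h x y : agree3 g h -> in_disk x y -> pd1v g x y = pd1v h x y.
Proof.
  intros H Hd. unfold pd1v.
  rewrite (agree_pd1 (c1 g) (c1 h)), (agree_pd1 (c2 g) (c2 h)), (agree_pd1 (c3 g) (c3 h)); auto;
  intros a b Hab; unfold c1, c2, c3; rewrite H; auto.
Qed.

Lemma D_dot3 (a1 a2 a3 b1 b2 b3 : R -> R) x :
  ex_derive a1 x -> ex_derive a2 x -> ex_derive a3 x ->
  ex_derive b1 x -> ex_derive b2 x -> ex_derive b3 x ->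
  Derive (fun t => a1 t * b1 t + a2 t * b2 t + a3 t * b3 t) x =
  (Derive a1 x * b1 x + Derive a2 x * b2 x + Derive a3 x * b3 x) +
  (a1 x * Derive b1 x + a2 x * Derive b2 x + a3 x * Derive b3 x).
Proof.
  intros. apply is_derive_unique. auto_derive; [repeat split; auto|].
  change (Derive (fun t => a1 t) x) with (Derive a1 x).
  change (Derive (fun t => a2 t) x) with (Derive a2 x).
  change (Derive (fun t => a3 t) x) with (Derive a3 x).
  change (Derive (fun t => b1 t) x) with (Derive b1 x).
  change (Derive (fun t => b2 t) x) with (Derive b2 x).
  change (Derive (fun t => b3 t) x) with (Derive b3 x).
  ring.
Qed.

Lemma pd1_dot a b x y : smooth_disk3 a -> smooth_disk3 b -> in_disk x y ->
  pd1 (fun x y => dot3 (a x y) (b x y)) x y = dot3 (pd1v a x y) (b x y) + dot3 (a x y) (pd1v b x y).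
Proof.
  intros [A1 [A2 A3]] [B1 [B2 B3]] Hd.
  exact (D_dot3 (fun t => c1 a t y) (fun t => c2 a t y) (fun t => c3 a t y)
                (fun t => c1 b t y) (fun t => c2 b t y) (fun t => c3 b t y) x
     (proj1 (proj2 (A1 nil x y Hd))) (proj1 (proj2 (A2 nil x y Hd))) (proj1 (proj2 (A3 nil x y Hd)))
     (proj1 (proj2 (B1 nil x y Hd))) (proj1 (proj2 (B2 nil x y Hd))) (proj1 (proj2 (B3 nil x y Hd)))).
Qed.
Lemma pd2_dot a b x y : smooth_disk3 a -> smooth_disk3 b -> in_disk x y ->
  pd2 (fun x y => dot3 (a x y) (b x y)) x y = dot3 (pd2v a x y) (b x y) + dot3 (a x y) (pd2v b x y).
Proof.
  intros [A1 [A2 A3]] [B1 [B2 B3]] Hd.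
  exact (D_dot3 (fun t => c1 a x t) (fun t => c2 a x t) (fun t => c3 a x t)
                (fun t => c1 b x t) (fun t => c2 b x t) (fun t => c3 b x t) y
     (proj2 (proj2 (A1 nil x y Hd))) (proj2 (proj2 (A2 nil x y Hd))) (proj2 (proj2 (A3 nil x y Hd)))
     (proj2 (proj2 (B1 nil x y Hd))) (proj2 (proj2 (B2 nil x y Hd))) (proj2 (proj2 (B3 nil x y Hd)))).
Qed.

Lemma pd1_exp2u u x y : smooth_disk u -> in_disk x y ->
  pd1 (fun x y => exp (2 * u x y)) x y = 2 * pd1 u x y * exp (2 * u x y).
Proof.
  intros H Hd. unfold pd1. apply is_derive_unique. auto_derive.
  - exact (proj1 (proj2 (H nil x y Hd))).
  - rewrite Rmult_1_l. reflexivity.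
Qed.
Lemma pd2_exp2u u x y : smooth_disk u -> in_disk x y ->
  pd2 (fun x y => exp (2 * u x y)) x y = 2 * pd2 u x y * exp (2 * u x y).
Proof.
  intros H Hd. unfold pd2. apply is_derive_unique. auto_derive.
  - exact (proj2 (proj2 (H nil x y Hd))).
  - rewrite Rmult_1_l. reflexivity.
Qed.

Lemma pd1_cst F c x y : agree F (fun _ _ => c) -> in_disk x y -> pd1 F x y = 0.
Proof. intros H Hd. rewrite (agree_pd1 _ _ H x y Hd). unfold pd1, pd2. apply Derive_const. Qed.
Lemma pd2_cst F c x y : agree F (fun _ _ => c) -> in_disk x y -> pd2 F x y = 0.
Proof. intros H Hd. rewrite (agree_pd2 _ _ H x y Hd). unfold pd1, pd2. apply Derive_const. Qed.

Definition det3 a b c d e f g h i : R := a*(e*i - f*h) - b*(d*i - f*g) + c*(d*h - e*g).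
Definition det4 m11 m12 m13 m14 m21 m22 m23 m24 m31 m32 m33 m34 m41 m42 m43 m44 : R :=
  m11 * det3 m22 m23 m24 m32 m33 m34 m42 m43 m44
  - m12 * det3 m21 m23 m24 m31 m33 m34 m41 m43 m44
  + m13 * det3 m21 m22 m24 m31 m32 m34 m41 m42 m44
  - m14 * det3 m21 m22 m23 m31 m32 m33 m41 m42 m43.

Lemma gram0 (a b c w v : V3) :
  det4 (dot3 a a) (dot3 a b) (dot3 a c) (dot3 a v)
       (dot3 b a) (dot3 b b) (dot3 b c) (dot3 b v)
       (dot3 c a) (dot3 c b) (dot3 c c) (dot3 c v)
       (dot3 w a) (dot3 w b) (dot3 w c) (dot3 w v) = 0.
Proof.
  destruct a as [[a1 a2] a3]; destruct b as [[b1 b2] b3]; destruct c as [[c1 c2] c3];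
  destruct w as [[w1 w2] w3]; destruct v as [[v1 v2] v3]; unfold det4, det3, dot3; simpl.
  ring.
Qed.

Lemma dot3_comm a b : dot3 a b = dot3 b a.
Proof. unfold dot3; ring. Qed.

Lemma gram (a b c w v : V3) E :
  0 < E -> dot3 a a = E -> dot3 b b = E -> dot3 c c = 1 ->
  dot3 a b = 0 -> dot3 a c = 0 -> dot3 b c = 0 ->
  dot3 w v = dot3 w a * dot3 v a / E + dot3 w b * dot3 v b / E + dot3 w c * dot3 v c.
Proof.
  intros HE Ha Hb Hc Hab Hac Hbc.
  assert (K := gram0 a b c w v).
  rewrite (dot3_comm b a), (dot3_comm c a), (dot3_comm c b), Ha, Hb, Hc, Hab, Hac, Hbc in K.
  rewrite (dot3_comm a v), (dot3_comm b v), (dot3_comm c v) in K.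
  unfold det4, det3 in K.
  apply (Rmult_eq_reg_l (E*E)); [|nra].
  field_simplify; [|lra]. nra.
Qed.

Lemma codazzi f nu u x y : smooth_disk3 f -> smooth_disk u -> conformal_with f u ->
  smooth_disk3 nu -> unit_normal f nu -> in_disk x y ->
  pd1 (h22 f nu) x y - pd2 (h12 f nu) x y = pd1 u x y * (h11 f nu x y + h22 f nu x y) /\
  pd2 (h11 f nu) x y - pd1 (h12 f nu) x y = pd2 u x y * (h11 f nu x y + h22 f nu x y).
Proof.
  intros Hf Hu Hc Hn Hnu Hd.
  assert (Hf1 := sm3_pd1v _ Hf). assert (Hf2 := sm3_pd2v _ Hf).
  assert (Hf11 := sm3_pd1v _ Hf1). assert (Hf21 := sm3_pd2v _ Hf1).
  assert (Hf12 := sm3_pd1v _ Hf2). assert (Hf22 := sm3_pd2v _ Hf2).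
  assert (S1 := schw3 _ x y Hf Hd).
  assert (S2 := schw3 _ x y Hf1 Hd).
  assert (S3 : pd1v (pd2v (pd2v f)) x y = pd2v (pd2v (pd1v f)) x y).
  { rewrite (schw3 _ x y Hf2 Hd). apply agree3_pd2v; [|exact Hd].
    intros a b h. apply schw3; assumption. }
  assert (A11 : agree (fun a b => dot3 (pd1v f a b) (pd1v f a b)) (fun a b => exp (2 * u a b)))
    by (intros a b h; apply (Hc a b h)).
  assert (A22 : agree (fun a b => dot3 (pd2v f a b) (pd2v f a b)) (fun a b => exp (2 * u a b)))
    by (intros a b h; apply (Hc a b h)).
  assert (A12 : agree (fun a b => dot3 (pd1v f a b) (pd2v f a b)) (fun _ _ => 0))
    by (intros a b h; apply (Hc a b h)).
  assert (K1 := agree_pd1 _ _ A11 x y Hd).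
  assert (K2 := agree_pd2 _ _ A11 x y Hd).
  assert (K3 := agree_pd1 _ _ A22 x y Hd).
  assert (K4 := agree_pd2 _ _ A22 x y Hd).
  assert (K5 := pd1_cst _ _ x y A12 Hd).
  assert (K6 := pd2_cst _ _ x y A12 Hd).
  rewrite (pd1_dot (pd1v f) (pd1v f)), pd1_exp2u in K1 by assumption.
  rewrite (pd2_dot (pd1v f) (pd1v f)), pd2_exp2u in K2 by assumption.
  rewrite (pd1_dot (pd2v f) (pd2v f)), pd1_exp2u in K3 by assumption.
  rewrite (pd2_dot (pd2v f) (pd2v f)), pd2_exp2u in K4 by assumption.
  rewrite (pd1_dot (pd1v f) (pd2v f)) in K5 by assumption.
  rewrite (pd2_dot (pd1v f) (pd2v f)) in K6 by assumption.
  assert (Ann : agree (fun a b => dot3 (nu a b) (nu a b)) (fun _ _ => 1))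
    by (intros a b h; apply (Hnu a b h)).
  assert (An1 : agree (fun a b => dot3 (nu a b) (pd1v f a b)) (fun _ _ => 0))
    by (intros a b h; apply (Hnu a b h)).
  assert (An2 : agree (fun a b => dot3 (nu a b) (pd2v f a b)) (fun _ _ => 0))
    by (intros a b h; apply (Hnu a b h)).
  assert (N1 := pd1_cst _ _ x y Ann Hd).
  assert (N2 := pd2_cst _ _ x y Ann Hd).
  assert (N3 := pd1_cst _ _ x y An1 Hd).
  assert (N4 := pd2_cst _ _ x y An1 Hd).
  assert (N5 := pd1_cst _ _ x y An2 Hd).
  assert (N6 := pd2_cst _ _ x y An2 Hd).
  rewrite (pd1_dot nu nu) in N1 by assumption.
  rewrite (pd2_dot nu nu) in N2 by assumption.
  rewrite (pd1_dot nu (pd1v f)) in N3 by assumption.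
  rewrite (pd2_dot nu (pd1v f)) in N4 by assumption.
  rewrite (pd1_dot nu (pd2v f)) in N5 by assumption.
  rewrite (pd2_dot nu (pd2v f)) in N6 by assumption.
  unfold h11, h12, h22.
  rewrite (pd1_dot (pd2v (pd2v f)) nu), (pd2_dot (pd2v (pd1v f)) nu),
          (pd2_dot (pd1v (pd1v f)) nu), (pd1_dot (pd2v (pd1v f)) nu) by assumption.
  destruct (Hc x y Hd) as [C1 [C2 C3]]. destruct (Hnu x y Hd) as [U1 [U2 U3]].
  assert (HE : 0 < exp (2 * u x y)) by apply exp_pos.
  rewrite dot3_comm in U2, U3.
  assert (G := fun w v => gram _ _ _ w v _ HE C1 C2 U1 C3 U2 U3).
  rewrite S2, S3. rewrite S1 in *.
  rewrite (G (pd2v (pd2v f) x y) (pd1v nu x y)), (G (pd2v (pd1v f) x y) (pd2v nu x y)),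
          (G (pd1v (pd1v f) x y) (pd2v nu x y)), (G (pd2v (pd1v f) x y) (pd1v nu x y)).
  set (E := exp (2 * u x y)) in *.
  set (a1 := pd1v f x y) in *. set (a2 := pd2v f x y) in *. set (n := nu x y) in *.
  set (f11 := pd1v (pd1v f) x y) in *. set (f21 := pd2v (pd1v f) x y) in *.
  set (f22 := pd2v (pd2v f) x y) in *. set (n1 := pd1v nu x y) in *. set (n2 := pd2v nu x y) in *.
  set (u1 := pd1 u x y) in *. set (u2 := pd2 u x y) in *.
  rewrite !(dot3_comm a1), !(dot3_comm a2), !(dot3_comm n) in *.
  assert (V1 : dot3 f22 a1 = - (u1 * E)) by lra.
  assert (V2 : dot3 f22 a2 = u2 * E) by lra.
  assert (V3 : dot3 f21 a1 = u2 * E) by lra.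
  assert (V4 : dot3 f21 a2 = u1 * E) by lra.
  assert (V5 : dot3 f11 a1 = u1 * E) by lra.
  assert (V6 : dot3 f11 a2 = - (u2 * E)) by lra.
  assert (V7 : dot3 n1 a1 = - dot3 f11 n) by lra.
  assert (V8 : dot3 n1 a2 = - dot3 f21 n) by lra.
  assert (V9 : dot3 n2 a1 = - dot3 f21 n) by lra.
  assert (V10 : dot3 n2 a2 = - dot3 f22 n) by lra.
  assert (V11 : dot3 n1 n = 0) by lra.
  assert (V12 : dot3 n2 n = 0) by lra.
  rewrite V1, V2, V3, V4, V5, V6, V7, V8, V9, V10, V11, V12.
  split; field; lra.
Qed.

Lemma pd1_Hform (U S : R -> R -> R) x y : ex_derive (fun t => U t y) x -> ex_derive (fun t => S t y) x ->
  pd1 (fun a b => exp (-(2 * U a b)) * S a b) x y = exp (-(2 * U x y)) * (pd1 S x y - 2 * pd1 U x y * S x y).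
Proof.
  intros H1 H2. unfold pd1. apply is_derive_unique. auto_derive; [split; auto|].
  change (Derive (fun t => U t y) x) with (pd1 U x y).
  change (Derive (fun t => S t y) x) with (pd1 S x y). ring.
Qed.
Lemma pd2_Hform (U S : R -> R -> R) x y : ex_derive (fun t => U x t) y -> ex_derive (fun t => S x t) y ->
  pd2 (fun a b => exp (-(2 * U a b)) * S a b) x y = exp (-(2 * U x y)) * (pd2 S x y - 2 * pd2 U x y * S x y).
Proof.
  intros H1 H2. unfold pd2. apply is_derive_unique. auto_derive; [split; auto|].
  change (Derive (fun t => U x t) y) with (pd2 U x y).
  change (Derive (fun t => S x t) y) with (pd2 S x y). ring.
Qed.
Lemma pd1_lin k a (F G : R -> R -> R) x y : ex_derive (fun t => F t y) x -> ex_derive (fun t => G t y) x ->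
  pd1 (fun p q => k * (F p q + a * G p q)) x y = k * (pd1 F x y + a * pd1 G x y).
Proof.
  intros H1 H2. unfold pd1. apply is_derive_unique. auto_derive; [split; auto|].
  change (Derive (fun t => F t y) x) with (pd1 F x y).
  change (Derive (fun t => G t y) x) with (pd1 G x y). ring.
Qed.
Lemma pd2_lin k a (F G : R -> R -> R) x y : ex_derive (fun t => F x t) y -> ex_derive (fun t => G x t) y ->
  pd2 (fun p q => k * (F p q + a * G p q)) x y = k * (pd2 F x y + a * pd2 G x y).
Proof.
  intros H1 H2. unfold pd2. apply is_derive_unique. auto_derive; [split; auto|].
  change (Derive (fun t => F x t) y) with (pd2 F x y).
  change (Derive (fun t => G x t) y) with (pd2 G x y). ring.
Qed.
Lemma pd1_opp (F : R -> R -> R) x y : pd1 (fun p q => - F p q) x y = - pd1 F x y.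
Proof. unfold pd1. apply Derive_opp. Qed.
Lemma pd2_opp (F : R -> R -> R) x y : pd2 (fun p q => - F p q) x y = - pd2 F x y.
Proof. unfold pd2. apply Derive_opp. Qed.
Lemma pd1_scal k (F : R -> R -> R) x y : pd1 (fun p q => k * F p q) x y = k * pd1 F x y.
Proof. unfold pd1. apply Derive_scal. Qed.
Lemma pd2_scal k (F : R -> R -> R) x y : pd2 (fun p q => k * F p q) x y = k * pd2 F x y.
Proof. unfold pd2. apply Derive_scal. Qed.

Definition dotE (p q : R -> R -> V3) : ex :=
  Ad (Ad (Mu (At (c1 p)) (At (c1 q))) (Mu (At (c2 p)) (At (c2 q)))) (Mu (At (c3 p)) (At (c3 q))).
Lemma dotE_wf p q : smooth_disk3 p -> smooth_disk3 q -> wf (dotE p q).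
Proof. intros [A [B C]] [D [E F]]. simpl. tauto. Qed.
Lemma dotE_ev p q x y : ev (dotE p q) x y = dot3 (p x y) (q x y).
Proof. reflexivity. Qed.

Lemma CC_dot p q : smooth_disk3 p -> smooth_disk3 q -> CC (fun x y => dot3 (p x y) (q x y)).
Proof. intros. exists (dotE p q). split; [apply dotE_wf; assumption|intros x y _; reflexivity]. Qed.

Lemma exp_m2 z : exp (-(2 * z)) = / exp (2 * z).
Proof. apply exp_Ropp. Qed.
Lemma exp_m4 z : exp (-(4 * z)) = / (exp (2 * z) * exp (2 * z)).
Proof. rewrite exp_Ropp, <- exp_plus. f_equal. f_equal. ring. Qed.

Lemma solveW e a b : e <> 0 -> / e * a + b = 0 -> a = - e * b.
Proof. intros He H. replace a with (e * (/ e * a)) by (field; exact He).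
  replace (/ e * a) with (- b) by lra. ring. Qed.

Theorem proposition2p2 (f nu : R -> R -> V3) (u : R -> R -> R) :
  smooth_disk3 f -> smooth_disk u -> conformal_with f u ->
  smooth_disk3 nu -> unit_normal f nu ->
  willmore_eq f nu u ->
  exists M11 M12 M21 M22 : R -> R -> C,
    smooth_diskC M11 /\ smooth_diskC M12 /\
    smooth_diskC M21 /\ smooth_diskC M22 /\
    forall x y : R, in_disk x y ->
      dzbar (phi f nu u) x y =
        Cplus (Cmult (M11 x y) (phi f nu u x y))
              (Cmult (M12 x y) (dz (realC (Hmean f nu u)) x y)) /\
      dzbar (dz (realC (Hmean f nu u))) x y =
        Cplus (Cmult (M21 x y) (phi f nu u x y))
              (Cmult (M22 x y) (dz (realC (Hmean f nu u)) x y)).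
Proof.
  intros Hf Hu Hc Hn Hnu Hw.
  assert (Hf1 := sm3_pd1v _ Hf). assert (Hf2 := sm3_pd2v _ Hf).
  assert (Hf11 := sm3_pd1v _ Hf1). assert (Hf21 := sm3_pd2v _ Hf1).
  assert (Hf22 := sm3_pd2v _ Hf2).
  assert (C11 : CC (h11 f nu)) by (apply CC_dot; assumption).
  assert (C12 : CC (h12 f nu)) by (apply CC_dot; assumption).
  assert (C22 : CC (h22 f nu)) by (apply CC_dot; assumption).
  assert (CH : CC (Hmean f nu u)).
  { destruct C11 as [e1 [W1 A1]]. destruct C22 as [e2 [W2 A2]].
    exists (Mu (Ex (Mu (Cs (-2)) (At u))) (Ad e1 e2)). split; [simpl; tauto|].
    intros a b h. simpl. try replace (-2 * u a b) with (-(2*u a b)) by ring. rewrite <- A1, <- A2 by exact h. reflexivity. }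
  assert (CA : CC (h0_11 f nu u)).
  { destruct C11 as [e1 [W1 A1]]. destruct C22 as [e2 [W2 A2]].
    exists (Ad (Mu (Cs (/2)) e1) (Mu (Cs (-/2)) e2)). split; [simpl; tauto|].
    intros a b h. simpl ev. rewrite <- A1, <- A2 by exact h.
    unfold h0_11, Hmean. rewrite exp_m2. field. apply Rgt_not_eq, exp_pos. }
  assert (SH := CC_smooth _ CH).
  exists (fun _ _ => (0, 0)), (fun x y => (exp (2 * u x y) / 2, 0)),
    (fun x y => (- / 2 * exp (-(2 * u x y)) * Hmean f nu u x y * h0_11 f nu u x y,
                 - / 2 * exp (-(2 * u x y)) * Hmean f nu u x y * h12 f nu x y)),
    (fun _ _ => (0, 0)).
  assert (Z : smooth_diskC (fun _ _ => (0, 0))).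
  { split; (apply CC_smooth; exists (Cs 0); split; [exact I| intros a b _; reflexivity]). }
  split; [exact Z|]. split; [|split; [|split; [exact Z|]]].
  - split; apply CC_smooth.
    + exists (Mu (Ex (Mu (Cs 2) (At u))) (Cs (/2))). split; [simpl; tauto|intros a b _; reflexivity].
    + exists (Cs 0); split; [exact I| intros a b _; reflexivity].
  - destruct CH as [eH [WH AH]]. destruct CA as [eA [WA AA]]. destruct C12 as [eB [WB AB]].
    split; apply CC_smooth.
    + exists (Mu (Mu (Mu (Cs (-/2)) (Ex (Mu (Cs (-2)) (At u)))) eH) eA). split; [simpl; tauto|].
      intros a b h. simpl. try replace (-2 * u a b) with (-(2*u a b)) by ring. rewrite <- AH, <- AA by exact h. reflexivity.
    + exists (Mu (Mu (Mu (Cs (-/2)) (Ex (Mu (Cs (-2)) (At u)))) eH) eB). split; [simpl; tauto|].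
      intros a b h. simpl. try replace (-2 * u a b) with (-(2*u a b)) by ring. rewrite <- AH, <- AB by exact h. reflexivity.
  - intros x y Hd.
    destruct (CC_good _ C11 x y Hd) as [_ [E11a E11b]].
    destruct (CC_good _ C12 x y Hd) as [_ [E12a E12b]].
    destruct (CC_good _ C22 x y Hd) as [_ [E22a E22b]].
    destruct (smooth_good _ Hu x y Hd) as [_ [EUa EUb]].
    destruct (codazzi f nu u x y Hf Hu Hc Hn Hnu Hd) as [Cod1 Cod2].
    assert (DH1 : pd1 (Hmean f nu u) x y = exp (-(2*u x y)) * (pd1 (h11 f nu) x y + pd1 (h22 f nu) x y - 2 * pd1 u x y * (h11 f nu x y + h22 f nu x y))).
    { eapply eq_trans; [apply (pd1_Hform u (fun a b => h11 f nu a b + h22 f nu a b))|].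
      - exact EUa.
      - auto_derive; repeat split; auto.
      - f_equal. f_equal. unfold pd1 at 1. rewrite Derive_plus; auto. }
    assert (DH2 : pd2 (Hmean f nu u) x y = exp (-(2*u x y)) * (pd2 (h11 f nu) x y + pd2 (h22 f nu) x y - 2 * pd2 u x y * (h11 f nu x y + h22 f nu x y))).
    { eapply eq_trans; [apply (pd2_Hform u (fun a b => h11 f nu a b + h22 f nu a b))|].
      - exact EUb.
      - auto_derive; repeat split; auto.
      - f_equal. f_equal. unfold pd2 at 1. rewrite Derive_plus; auto. }
    assert (AgA : agree (h0_11 f nu u) (fun p q => /2 * (h11 f nu p q + -1 * h22 f nu p q))).
    { intros a b h. unfold h0_11, Hmean. rewrite exp_m2. field. apply Rgt_not_eq, exp_pos. }
    assert (DA1 : pd1 (cre (phi f nu u)) x y = /2 * (pd1 (h11 f nu) x y + -1 * pd1 (h22 f nu) x y)).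
    { change (pd1 (h0_11 f nu u) x y = /2 * (pd1 (h11 f nu) x y + -1 * pd1 (h22 f nu) x y)).
      rewrite (agree_pd1 _ _ AgA x y Hd). apply pd1_lin; assumption. }
    assert (DA2 : pd2 (cre (phi f nu u)) x y = /2 * (pd2 (h11 f nu) x y + -1 * pd2 (h22 f nu) x y)).
    { change (pd2 (h0_11 f nu u) x y = /2 * (pd2 (h11 f nu) x y + -1 * pd2 (h22 f nu) x y)).
      rewrite (agree_pd2 _ _ AgA x y Hd). apply pd2_lin; assumption. }
    assert (DB1 : pd1 (cim (phi f nu u)) x y = - pd1 (h12 f nu) x y).
    { exact (pd1_opp (h12 f nu) x y). }
    assert (DB2 : pd2 (cim (phi f nu u)) x y = - pd2 (h12 f nu) x y).
    { exact (pd2_opp (h12 f nu) x y). }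
    assert (Z1 : forall a b, pd2 (cim (realC (Hmean f nu u))) a b = 0).
    { intros a b. unfold pd2, cim, realC. simpl. apply Derive_const. }
    assert (Z2 : forall a b, pd1 (cim (realC (Hmean f nu u))) a b = 0).
    { intros a b. unfold pd1, cim, realC. simpl. apply Derive_const. }
    assert (R1 : pd1 (cre (dz (realC (Hmean f nu u)))) x y = /2 * pd1 (pd1 (Hmean f nu u)) x y).
    { transitivity (Derive (fun t => /2 * pd1 (Hmean f nu u) t y) x); [|apply Derive_scal].
      apply Derive_ext. intros t. unfold dz, cre at 1. simpl fst. rewrite Z1.
      change (pd1 (cre (realC (Hmean f nu u))) t y) with (pd1 (Hmean f nu u) t y). field. }
    assert (R4 : pd2 (cre (dz (realC (Hmean f nu u)))) x y = /2 * pd2 (pd1 (Hmean f nu u)) x y).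
    { transitivity (Derive (fun t => /2 * pd1 (Hmean f nu u) x t) y); [|apply Derive_scal].
      apply Derive_ext. intros t. unfold dz, cre at 1. simpl fst. rewrite Z1.
      change (pd1 (cre (realC (Hmean f nu u))) x t) with (pd1 (Hmean f nu u) x t). field. }
    assert (R2 : pd2 (cim (dz (realC (Hmean f nu u)))) x y = -/2 * pd2 (pd2 (Hmean f nu u)) x y).
    { transitivity (Derive (fun t => -/2 * pd2 (Hmean f nu u) x t) y); [|apply Derive_scal].
      apply Derive_ext. intros t. unfold dz, cim at 1. simpl snd. rewrite Z2.
      change (pd2 (cre (realC (Hmean f nu u))) x t) with (pd2 (Hmean f nu u) x t). field. }
    assert (R3 : pd1 (cim (dz (realC (Hmean f nu u)))) x y = -/2 * pd1 (pd2 (Hmean f nu u)) x y).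
    { transitivity (Derive (fun t => -/2 * pd2 (Hmean f nu u) t y) x); [|apply Derive_scal].
      apply Derive_ext. intros t. unfold dz, cim at 1. simpl snd. rewrite Z2.
      change (pd2 (cre (realC (Hmean f nu u))) t y) with (pd2 (Hmean f nu u) t y). field. }
    assert (SchH := Schw _ x y SH Hd).
    assert (W := Hw x y Hd). unfold lap_g, normA0sq in W.
    unfold dzbar. rewrite DA1, DA2, DB1, DB2, R1, R2, R3, R4.
    unfold dz. rewrite Z1, Z2.
    change (pd1 (cre (realC (Hmean f nu u))) x y) with (pd1 (Hmean f nu u) x y).
    change (pd2 (cre (realC (Hmean f nu u))) x y) with (pd2 (Hmean f nu u) x y).
    rewrite SchH. rewrite DH1, DH2.
    unfold Cplus, Cmult, phi. simpl.
    set (P11 := pd1 (pd1 (Hmean f nu u)) x y) in *.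
    set (P22 := pd2 (pd2 (Hmean f nu u)) x y) in *.
    rewrite exp_m2 in W. apply solveW in W; [|apply Rgt_not_eq, exp_pos].
    unfold h0_22, h0_12, h0_11, Hmean in *. rewrite exp_m4 in W. rewrite !exp_m2 in *.
    set (e := exp (2 * u x y)) in *. assert (He : 0 < e) by apply exp_pos.
    assert (Q1 : pd2 (h12 f nu) x y = pd1 (h22 f nu) x y - pd1 u x y * (h11 f nu x y + h22 f nu x y)) by lra.
    assert (Q2 : pd1 (h12 f nu) x y = pd2 (h11 f nu) x y - pd2 u x y * (h11 f nu x y + h22 f nu x y)) by lra.
    rewrite Q1, Q2.
    replace P11 with ((P11 + P22) - P22) by ring. rewrite W.
    split; f_equal; field; lra.
Qed.
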